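(* Let $\Lambda=B(\mathbb Z^2)\subset\mathbb R^2$ be a Bravais lattice and let $f\colon\mathbb R\to\mathbb R$ be a non-negative, compactly supported function with $f(0)=0$ and $\sum_{u\in\Lambda\setminus\{0\}} f(\|u\|^2)<\infty$. Then, in the strong operator topology on bounded operators on $\ell^2(\Lambda)$, $W_f^N\to W_f$ and $L_f^N\to L_f$ as $N\to\infty$ through even integers.
   Context: The operator $W_f$ on $\ell^2(\Lambda)$ is $(W_f\psi)(v)=\sum_{u\in\Lambda,\,u\ne v} f(\|u-v\|^2)\psi(u)$, and $L_f=\big(\sum_{u\in\Lambda\setminus\{0\}}f(\|u\|^2)\big)\mathrm{Id}-W_f$. For an even integer $N$, let $\Lambda^N=\{B(i-N/2,\ j-N/2)^t: i,j\in\{0,1,\dots,N-1\}\}\subset\Lambda$ (an $N^2$-point truncation of $\Lambda$), and let $d$ denote the distance on $\Lambda^N$ after periodic identification of the boundaries, i.e. the distance in the torus $\mathbb R^2/B(N\mathbb Z^2)$. Define $W_f^N$ on $\ell^2(\Lambda^N)$ by $(W_f^N\psi)(v)=\sum_{u\in\Lambda^N,\,u\ne v} f(d^2(u,v))\psi(u)$, and $L_f^N$ by $(L_f^N\psi)(v)=\big[\sum_{u\in\Lambda^N\setminus\{0\}} f(d^2(u,0))\big]\psi(v)-(W_f^N\psi)(v)$ for $v\in\Lambda^N$. Both are extended to operators on $\ell^2(\Lambda)$ by applying them to the restriction of $\psi$ to $\Lambda^N$ and setting the output to $0$ at points $v\notin\Lambda^N$. *)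

(* Defs.v *)
From Stdlib Require Import Reals ZArith List Lia.
From Coquelicot Require Import Coquelicot.
Open Scope R_scope.

(* Points of Lambda are indexed by their integer
   coordinates a in Z^2 (u = B a); this is a bijection when det B <> 0. *)
Record mat2 := Mat2 { b11 : R; b12 : R; b21 : R; b22 : R }.

Definition det2 (B : mat2) : R := b11 B * b22 B - b12 B * b21 B.

Definition pt := (Z * Z)%type.

Definition zz_eqb (u v : pt) : bool :=
  (Z.eqb (fst u) (fst v) && Z.eqb (snd u) (snd v))%bool.

Definition zsub (u v : pt) : pt := ((fst u - fst v)%Z, (snd u - snd v)%Z).

Definition lat_norm2 (B : mat2) (a : pt) : R :=
  (b11 B * IZR (fst a) + b12 B * IZR (snd a)) ^ 2
  + (b21 B * IZR (fst a) + b22 B * IZR (snd a)) ^ 2.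

Definition sumlist (l : list pt) (g : pt -> R) : R :=
  fold_right (fun x acc => g x + acc) 0 l.

(* the box [-M, M]^2 of integer coordinates; infinite sums over Lambda are
   limits of sums over these exhausting boxes *)
Definition zrange (M : nat) : list Z :=
  map (fun k => (Z.of_nat k - Z.of_nat M)%Z) (seq 0 (2 * M + 1)).
Definition box (M : nat) : list pt := list_prod (zrange M) (zrange M).
Definition boxsum (M : nat) (g : pt -> R) : R := sumlist (box M) g.

Definition latsum (g : pt -> R) : R := real (Lim_seq (fun M => boxsum M g)).

Definition trunc1 (N : nat) : list Z :=
  map (fun i => (Z.of_nat i - Z.of_nat (N / 2))%Z) (seq 0 N).
Definition trunc (N : nat) : list pt := list_prod (trunc1 N) (trunc1 N).
Definition in_trunc (N : nat) (v : pt) : bool := existsb (zz_eqb v) (trunc N).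

(* squared distance in the torus R^2 / B(N Z^2) between B u and B v *)
Definition torus_d2 (B : mat2) (N : nat) (u v : pt) : R :=
  real (Glb_Rbar (fun r => exists k : pt,
    r = lat_norm2 B (((fst u - fst v) + Z.of_nat N * fst k)%Z,
                     ((snd u - snd v) + Z.of_nat N * snd k)%Z))).

Definition op := (pt -> R) -> (pt -> R).

Definition l2 (psi : pt -> R) : Prop :=
  exists C : R, forall M : nat, boxsum M (fun v => psi v ^ 2) <= C.

Definition W (B : mat2) (f : R -> R) : op := fun psi v =>
  latsum (fun u => if zz_eqb u v then 0 else f (lat_norm2 B (zsub u v)) * psi u).

Definition deg (B : mat2) (f : R -> R) : R :=
  latsum (fun u => if zz_eqb u (0%Z, 0%Z) then 0 else f (lat_norm2 B u)).

Definition L (B : mat2) (f : R -> R) : op := fun psi v =>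
  deg B f * psi v - W B f psi v.

(* W_f^N, extended by 0 outside Lambda^N *)
Definition WN (B : mat2) (f : R -> R) (N : nat) : op := fun psi v =>
  if in_trunc N v then
    sumlist (trunc N)
      (fun u => if zz_eqb u v then 0 else f (torus_d2 B N u v) * psi u)
  else 0.

Definition degN (B : mat2) (f : R -> R) (N : nat) : R :=
  sumlist (trunc N)
    (fun u => if zz_eqb u (0%Z, 0%Z) then 0 else f (torus_d2 B N u (0%Z, 0%Z))).

Definition LN (B : mat2) (f : R -> R) (N : nat) : op := fun psi v =>
  if in_trunc N v then degN B f N * psi v - WN B f N psi v else 0.

(* strong operator convergence T_N -> T as N -> oo through even integers:
   for every psi in l^2, || T_N psi - T psi ||_2^2 -> 0 *)
Definition strong_conv_even (T : nat -> op) (T0 : op) : Prop :=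
  forall psi : pt -> R, l2 psi ->
  forall eps : R, 0 < eps ->
  exists N0 : nat, forall N : nat, Nat.Even N -> (N0 <= N)%nat ->
  forall M : nat, boxsum M (fun v => (T N psi v - T0 psi v) ^ 2) <= eps.

(* Main.v *)
Require Import Defs.
From Stdlib Require Import Reals ZArith List Lia Lra Psatz Classical.
From Coquelicot Require Import Coquelicot.
Open Scope R_scope.


Definition sl {A : Type} (l : list A) (g : A -> R) : R := fold_right (fun x acc => g x + acc) 0 l.
Section Sums.
Context {A : Type}.
Implicit Types (l : list A) (g h : A -> R).

Lemma sl_cons a l g : sl (a :: l) g = g a + sl l g.
Proof. reflexivity. Qed.
Lemma sl_nil g : sl (@nil A) g = 0.
Proof. reflexivity. Qed.

Lemma sl_app l1 l2 g : sl (l1 ++ l2) g = sl l1 g + sl l2 g.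
Proof. induction l1; simpl; [lra|]. unfold sl in *. simpl. rewrite IHl1. lra. Qed.

Lemma sl_ext l g h : (forall x, In x l -> g x = h x) -> sl l g = sl l h.
Proof. induction l; intros H; simpl; auto. unfold sl in *; simpl.
  rewrite H by (left; auto). rewrite IHl; auto. intros; apply H; right; auto. Qed.

Lemma sl_le l g h : (forall x, In x l -> g x <= h x) -> sl l g <= sl l h.
Proof. induction l; intros H; unfold sl in *; simpl; [lra|].
  assert (g a <= h a) by (apply H; left; auto).
  assert (fold_right (fun x acc => g x + acc) 0 l <= fold_right (fun x acc => h x + acc) 0 l)
   by (apply IHl; intros; apply H; right; auto). lra. Qed.

Lemma sl_nonneg l g : (forall x, In x l -> 0 <= g x) -> 0 <= sl l g.
Proof. intros H. replace 0 with (sl l (fun _ => 0)). apply sl_le; auto.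
  induction l; simpl; auto. unfold sl in *; simpl; rewrite IHl; [lra|]. intros; apply H; right; auto. Qed.

Lemma sl_zero l g : (forall x, In x l -> g x = 0) -> sl l g = 0.
Proof. intros H. transitivity (sl l (fun _ => 0)). apply sl_ext; auto.
  clear H; induction l; simpl; auto. unfold sl in *; simpl; rewrite IHl; lra. Qed.

Lemma sl_plus l g h : sl l (fun x => g x + h x) = sl l g + sl l h.
Proof. induction l; unfold sl in *; simpl; [lra|]. rewrite IHl; lra. Qed.

Lemma sl_minus l g h : sl l (fun x => g x - h x) = sl l g - sl l h.
Proof. induction l; unfold sl in *; simpl; [lra|]. rewrite IHl; lra. Qed.

Lemma sl_scal l c g : sl l (fun x => c * g x) = c * sl l g.
Proof. induction l; unfold sl in *; simpl; [lra|]. rewrite IHl; lra. Qed.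

Variable dec : forall x y : A, {x = y} + {x <> y}.

Lemma sl_remove l a h : NoDup l -> In a l -> sl l h = h a + sl (remove dec a l) h.
Proof. induction l; intros Hn Hi; [destruct Hi|]. inversion Hn; subst.
  simpl remove. destruct (dec a a0).
  - subst. rewrite notin_remove by auto. reflexivity.
  - destruct Hi as [Hi|Hi]; [congruence|]. rewrite !sl_cons. rewrite IHl; auto. lra. Qed.

Lemma NoDup_remove' l a : NoDup l -> NoDup (remove dec a l).
Proof. induction l; intros Hn; simpl; auto. inversion Hn; subst.
  destruct (dec a a0); auto. constructor; auto. intros Hi. apply in_remove in Hi. tauto. Qed.

Lemma sum_incl_le l1 l2 h : NoDup l1 -> NoDup l2 -> incl l1 l2 ->
  (forall x, In x l2 -> 0 <= h x) -> sl l1 h <= sl l2 h.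
Proof. revert l2; induction l1; intros l2 H1 H2 Hi Hh.
  - simpl. apply sl_nonneg; auto.
  - inversion H1; subst. rewrite (sl_remove l2 a h H2) by (apply Hi; left; auto).
    rewrite sl_cons. assert (sl l1 h <= sl (remove dec a l2) h); [|lra].
    apply IHl1; auto. apply NoDup_remove'; auto.
    intros x Hx. apply in_in_remove. intro; subst; auto. apply Hi; right; auto.
    intros x Hx. apply in_remove in Hx. apply Hh; tauto. Qed.

Lemma sum_incl_eq l1 l2 h : NoDup l1 -> NoDup l2 -> incl l1 l2 ->
  (forall x, In x l2 -> ~ In x l1 -> h x = 0) -> sl l2 h = sl l1 h.
Proof. revert l2; induction l1; intros l2 H1 H2 Hi Hh.
  - simpl. apply sl_zero. intros; apply Hh; auto.
  - inversion H1; subst. rewrite (sl_remove l2 a h H2) by (apply Hi; left; auto).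
    rewrite sl_cons. f_equal.
    apply IHl1; auto. apply NoDup_remove'; auto.
    intros x Hx. apply in_in_remove. intro; subst; auto. apply Hi; right; auto.
    intros x Hx Hn. apply in_remove in Hx. apply Hh; [tauto|]. intros [E|E]; subst; tauto. Qed.

Lemma sl_CS l c a : (forall x, In x l -> 0 <= c x) ->
  (sl l (fun x => c x * a x)) ^ 2 <= sl l c * sl l (fun x => c x * a x ^ 2).
Proof. induction l; intros Hc; [simpl; lra|].
  rewrite !sl_cons.
  assert (H0 : 0 <= c a0) by (apply Hc; left; auto).
  assert (HS : 0 <= sl l c) by (apply sl_nonneg; intros; apply Hc; right; auto).
  assert (HQ : 0 <= sl l (fun x => c x * a x ^ 2)) by
   (apply sl_nonneg; intros; assert (0 <= c x) by (apply Hc; right; auto); nra).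
  specialize (IHl (fun x Hx => Hc x (or_intror Hx))).
  set (S := sl l c) in *. set (T := sl l (fun x => c x * a x)) in *.
  set (Q := sl l (fun x => c x * a x ^ 2)) in *.
  assert (2 * a a0 * T <= S * a a0 ^ 2 + Q).
  { destruct (Req_dec S 0) as [E|E].
    - rewrite E in IHl. assert (HT : T = 0) by nra. rewrite HT, E. nra.
    - assert (HE : S * (S * a a0 ^ 2 + Q - 2 * a a0 * T) = (S * a a0 - T) ^ 2 + (S * Q - T ^ 2)) by ring.
      assert (HP : 0 < S) by lra.
      assert (0 <= S * (S * a a0 ^ 2 + Q - 2 * a a0 * T)).
      { rewrite HE. apply Rplus_le_le_0_compat; [apply pow2_ge_0| lra]. }
      assert (0 <= S * a a0 ^ 2 + Q - 2 * a a0 * T).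
      { destruct (Rle_or_lt 0 (S * a a0 ^ 2 + Q - 2 * a a0 * T)); auto. nra. }
      lra. }
  nra.
Qed.
End Sums.
Lemma sl_map {A B0 : Type} (phi : B0 -> A) (l : list B0) (g : A -> R) : sl (map phi l) g = sl l (fun x => g (phi x)).
Proof. induction l; unfold sl in *; simpl; auto. rewrite IHl; auto. Qed.

Lemma sl_filter {A : Type} (P : A -> bool) (l : list A) (g : A -> R) : sl (filter P l) g = sl l (fun x => if P x then g x else 0).
Proof. induction l; unfold sl in *; simpl; auto. destruct (P a); simpl; rewrite IHl; lra. Qed.

Lemma sl_exch {A B0 : Type} (l1 : list A) (l2 : list B0) (G : A -> B0 -> R) :
  sl l1 (fun x => sl l2 (fun y => G x y)) = sl l2 (fun y => sl l1 (fun x => G x y)).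
Proof. induction l1.
  - rewrite (sl_zero l2 (fun y => sl nil (fun x => G x y))); reflexivity.
  - rewrite sl_cons, IHl1. rewrite <- sl_plus. apply sl_ext. intros; rewrite sl_cons; auto. Qed.



Lemma sumlist_sl l g : sumlist l g = sl l g.
Proof. reflexivity. Qed.

Lemma pt_eq_dec : forall x y : pt, {x = y} + {x <> y}.
Proof. decide equality; apply Z.eq_dec. Qed.

Lemma zz_eqb_spec u v : zz_eqb u v = true <-> u = v.
Proof. destruct u as [a b], v as [c d]; unfold zz_eqb; simpl.
  rewrite Bool.andb_true_iff, !Z.eqb_eq. split; [intros [-> ->]; auto| intros H; inversion H; auto]. Qed.

Lemma zz_eqb_false u v : zz_eqb u v = false <-> u <> v.
Proof. rewrite <- zz_eqb_spec. destruct (zz_eqb u v); split; congruence. Qed.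

Lemma NoDup_prod {A B0 : Type} (l1 : list A) (l2 : list B0) :
  NoDup l1 -> NoDup l2 -> NoDup (list_prod l1 l2).
Proof. induction l1; intros H1 H2; simpl; [constructor|]. inversion H1; subst.
  apply NoDup_app; auto.
  - apply NoDup_map_NoDup_ForallPairs; auto. intros x y _ _ E; inversion E; auto.
  - intros [x y] Hx Hy. apply in_map_iff in Hx. destruct Hx as [z [E _]]. inversion E; subst.
    apply in_prod_iff in Hy. tauto. Qed.

Lemma in_zrange M z : In z (zrange M) <-> (- Z.of_nat M <= z <= Z.of_nat M)%Z.
Proof. unfold zrange. rewrite in_map_iff. split.
  - intros [k [E Hk]]. apply in_seq in Hk. lia.
  - intros H. exists (Z.to_nat (z + Z.of_nat M)). split; [lia|]. apply in_seq. lia. Qed.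

Lemma NoDup_zrange M : NoDup (zrange M).
Proof. apply NoDup_map_NoDup_ForallPairs; [intros x y _ _ E; lia| apply seq_NoDup]. Qed.

Lemma in_box M z : In z (box M) <->
  (- Z.of_nat M <= fst z <= Z.of_nat M)%Z /\ (- Z.of_nat M <= snd z <= Z.of_nat M)%Z.
Proof. destruct z; unfold box, pt; rewrite in_prod_iff, !in_zrange; simpl; tauto. Qed.

Lemma NoDup_box M : NoDup (box M).
Proof. apply NoDup_prod; apply NoDup_zrange. Qed.

Lemma in_trunc1 n z : In z (trunc1 (2 * n)) <-> (- Z.of_nat n <= z < Z.of_nat n)%Z.
Proof. unfold trunc1. replace (2 * n / 2)%nat with n by (rewrite Nat.mul_comm, Nat.div_mul; lia).
  rewrite in_map_iff. split.
  - intros [k [E Hk]]. apply in_seq in Hk. lia.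
  - intros H. exists (Z.to_nat (z + Z.of_nat n)). split; [lia|]. apply in_seq. lia. Qed.

Lemma NoDup_trunc n : NoDup (trunc (2 * n)).
Proof. apply NoDup_prod; apply NoDup_map_NoDup_ForallPairs; try (intros x y _ _ E; lia); apply seq_NoDup. Qed.

Definition inT (n : nat) (z : pt) : Prop :=
  (- Z.of_nat n <= fst z < Z.of_nat n)%Z /\ (- Z.of_nat n <= snd z < Z.of_nat n)%Z.

Lemma in_trunc_iff n z : In z (trunc (2 * n)) <-> inT n z.
Proof. destruct z; unfold trunc, inT, pt; rewrite in_prod_iff, !in_trunc1; simpl; tauto. Qed.

Lemma in_trunc_b n z : in_trunc (2 * n) z = true <-> inT n z.
Proof. unfold in_trunc. rewrite existsb_exists, <- in_trunc_iff. split.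
  - intros [x [Hx E]]. apply zz_eqb_spec in E. subst; auto.
  - intros H. exists z. split; auto. apply zz_eqb_spec; auto. Qed.

Definition wrapZ (n z : Z) : Z := ((z + n) mod (2 * n) - n)%Z.
Definition wrap (n : Z) (p : pt) : pt := (wrapZ n (fst p), wrapZ n (snd p)).
Definition padd (v w : pt) : pt := ((fst v + fst w)%Z, (snd v + snd w)%Z).

Lemma wrapZ_range n z : (0 < n)%Z -> (- n <= wrapZ n z < n)%Z.
Proof. intros. unfold wrapZ. pose proof (Z.mod_pos_bound (z + n) (2 * n)). lia. Qed.

Lemma wrapZ_shift n z k : (0 < n)%Z -> wrapZ n (z + 2 * n * k) = wrapZ n z.
Proof. intros. unfold wrapZ. replace (z + 2 * n * k + n)%Z with ((z + n) + k * (2 * n))%Z by ring.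
  rewrite Z_mod_plus_full. auto. Qed.

Lemma wrapZ_id n z : (- n <= z < n)%Z -> wrapZ n z = z.
Proof. intros. unfold wrapZ. rewrite Z.mod_small; lia. Qed.

Lemma wrapZ_lo n z : (- 3 * n <= z < - n)%Z -> wrapZ n z = (z + 2 * n)%Z.
Proof. intros. transitivity (wrapZ n (z + 2 * n + 2 * n * (-1))).
  f_equal; ring. rewrite wrapZ_shift by lia. apply wrapZ_id. lia. Qed.

Lemma wrapZ_hi n z : (n <= z < 3 * n)%Z -> wrapZ n z = (z - 2 * n)%Z.
Proof. intros. transitivity (wrapZ n (z - 2 * n + 2 * n * 1)).
  f_equal; ring. rewrite wrapZ_shift by lia. apply wrapZ_id. lia. Qed.

Lemma wrapZ_cong n z : (0 < n)%Z -> exists k, wrapZ n z = (z + 2 * n * k)%Z.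
Proof. intros. exists (- ((z + n) / (2 * n)))%Z. unfold wrapZ. rewrite Z.mod_eq by lia. ring. Qed.

Lemma wrapZ_inj n z1 z2 : (0 < n)%Z -> wrapZ n z1 = wrapZ n z2 -> exists k, (z1 - z2 = 2 * n * k)%Z.
Proof. intros Hn E. destruct (wrapZ_cong n z1 Hn) as [k1 E1]. destruct (wrapZ_cong n z2 Hn) as [k2 E2].
  exists (k2 - k1)%Z. lia. Qed.

Lemma small_mult n a k : (0 < n)%Z -> (Z.abs a < 2 * n)%Z -> a = (2 * n * k)%Z -> a = 0%Z.
Proof. intros. destruct (Z.eq_dec k 0); [subst; lia|]. nia. Qed.

Lemma lat_norm2_0 B : lat_norm2 B (0%Z, 0%Z) = 0.
Proof. unfold lat_norm2; simpl. ring. Qed.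

Lemma lat_norm2_nonneg B d : 0 <= lat_norm2 B d.
Proof. unfold lat_norm2. apply Rplus_le_le_0_compat; apply pow2_ge_0. Qed.

Lemma norm_bound B (hB : det2 B <> 0) (R1 : R) (hR1 : 0 <= R1) :
  exists K : nat, forall d : pt, lat_norm2 B d <= R1 ->
    (Z.abs (fst d) <= Z.of_nat K)%Z /\ (Z.abs (snd d) <= Z.of_nat K)%Z.
Proof.
  set (S := b11 B ^ 2 + b12 B ^ 2 + b21 B ^ 2 + b22 B ^ 2).
  set (Q := S * R1 / (det2 B) ^ 2).
  exists (Z.to_nat (up Q)). intros [d1 d2] Hd. simpl.
  unfold lat_norm2 in Hd; simpl in Hd.
  set (a1 := IZR d1) in *. set (a2 := IZR d2) in *.
  set (x := b11 B * a1 + b12 B * a2) in *. set (y := b21 B * a1 + b22 B * a2) in *.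
  assert (HD : 0 < det2 B ^ 2) by (apply pow2_gt_0 ; auto).
  assert (HS : 0 <= S) by (unfold S; nra).
  assert (E1 : det2 B * a1 = b22 B * x - b12 B * y) by (unfold det2, x, y; ring).
  assert (E2 : det2 B * a2 = b11 B * y - b21 B * x) by (unfold det2, x, y; ring).
  assert (C1 : (b22 B * x - b12 B * y) ^ 2 <= S * (x ^ 2 + y ^ 2)).
  { assert (0 <= (b22 B * y + b12 B * x) ^ 2) by apply pow2_ge_0.
    assert (0 <= (b11 B ^ 2 + b21 B ^ 2) * (x ^ 2 + y ^ 2)) by nra. unfold S. nra. }
  assert (C2 : (b11 B * y - b21 B * x) ^ 2 <= S * (x ^ 2 + y ^ 2)).
  { assert (0 <= (b11 B * x + b21 B * y) ^ 2) by apply pow2_ge_0.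
    assert (0 <= (b12 B ^ 2 + b22 B ^ 2) * (x ^ 2 + y ^ 2)) by nra. unfold S. nra. }
  assert (Hb : forall a, det2 B ^ 2 * a ^ 2 <= S * R1 -> a ^ 2 <= Q).
  { intros a Ha. unfold Q. apply Rmult_le_reg_l with (det2 B ^ 2); auto.
    replace (det2 B ^ 2 * (S * R1 / det2 B ^ 2)) with (S * R1) by (field; auto). auto. }
  assert (Q1 : a1 ^ 2 <= Q).
  { apply Hb. replace (det2 B ^ 2 * a1 ^ 2) with ((det2 B * a1) ^ 2) by ring. rewrite E1. nra. }
  assert (Q2 : a2 ^ 2 <= Q).
  { apply Hb. replace (det2 B ^ 2 * a2 ^ 2) with ((det2 B * a2) ^ 2) by ring. rewrite E2. nra. }
  assert (Habs : forall z : Z, IZR (Z.abs z) <= IZR z ^ 2).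
  { intros z. replace (IZR z ^ 2) with (IZR (z * z)) by (rewrite mult_IZR; ring). apply IZR_le. nia. }
  destruct (archimed Q) as [HQ _].
  assert (A1 : (Z.abs d1 < up Q)%Z) by (apply lt_IZR; pose proof (Habs d1); unfold a1 in *; lra).
  assert (A2 : (Z.abs d2 < up Q)%Z) by (apply lt_IZR; pose proof (Habs d2); unfold a2 in *; lra).
  lia.
Qed.


Lemma glb_le (E : R -> Prop) x0 a : E x0 -> (forall e, E e -> a <= e) ->
  a <= real (Glb_Rbar E) <= x0.
Proof. intros H0 Ha. destruct (Glb_Rbar_correct E) as [Hlb Hg].
  assert (L1 := Hlb x0 H0). assert (L2 : Rbar_le a (Glb_Rbar E)) by (apply Hg; intros x Hx; apply Ha; auto).
  destruct (Glb_Rbar E); simpl in *; try contradiction; lra. Qed.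

Lemma glb_min (E : R -> Prop) x0 : E x0 -> (forall e, E e -> x0 <= e) -> real (Glb_Rbar E) = x0.
Proof. intros H0 Ha. pose proof (glb_le E x0 x0 H0 Ha). lra. Qed.

Definition tset B (N : nat) (d : pt) : R -> Prop := fun r => exists k : pt,
  r = lat_norm2 B ((fst d + Z.of_nat N * fst k)%Z, (snd d + Z.of_nat N * snd k)%Z).

Lemma torus_tset B N u v : torus_d2 B N u v = real (Glb_Rbar (tset B N (zsub u v))).
Proof. reflexivity. Qed.

Section Torus.
Variables (B : mat2) (f : R -> R) (R1 : R) (K : nat).
Hypothesis HK : forall d : pt, lat_norm2 B d <= R1 ->
    (Z.abs (fst d) <= Z.of_nat K)%Z /\ (Z.abs (snd d) <= Z.of_nat K)%Z.
Hypothesis HfR : forall y, R1 <= y -> f y = 0.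
Hypothesis hf0 : f 0 = 0.

Lemma far_norm (d : pt) : (Z.of_nat K < Z.abs (fst d) \/ Z.of_nat K < Z.abs (snd d))%Z ->
  R1 < lat_norm2 B d.
Proof. intros H. destruct (Rle_or_lt (lat_norm2 B d) R1) as [H1|H1]; auto.
  apply HK in H1. lia. Qed.

Lemma torus_f_A n d w k0 : (Z.of_nat K < Z.of_nat n)%Z ->
  (Z.abs (fst w) <= Z.of_nat K)%Z -> (Z.abs (snd w) <= Z.of_nat K)%Z ->
  fst w = (fst d + Z.of_nat (2 * n) * fst k0)%Z -> snd w = (snd d + Z.of_nat (2 * n) * snd k0)%Z ->
  f (real (Glb_Rbar (tset B (2 * n) d))) = f (lat_norm2 B w).
Proof. intros Hn Hw1 Hw2 E1 E2.
  assert (H0 : tset B (2 * n) d (lat_norm2 B w)).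
  { exists k0. f_equal. destruct w; simpl in *; subst; auto. }
  assert (Hel : forall e, tset B (2 * n) d e -> e = lat_norm2 B w \/ R1 < e).
  { intros e [k ->]. destruct (Z.eq_dec (fst k) (fst k0)) as [Ea|Ea];
      [destruct (Z.eq_dec (snd k) (snd k0)) as [Eb|Eb]|].
    - left. f_equal. destruct w; simpl in *. rewrite Ea, Eb, <- E1, <- E2. auto.
    - right. apply far_norm. simpl. right. nia.
    - right. apply far_norm. simpl. left. nia. }
  destruct (Rle_or_lt (lat_norm2 B w) R1) as [Hs|Hs].
  - rewrite (glb_min _ (lat_norm2 B w)); auto. intros e He. destruct (Hel e He); lra.
  - rewrite (HfR (lat_norm2 B w)) by lra. apply HfR.
    apply (glb_le _ (lat_norm2 B w)); auto. intros e He. destruct (Hel e He); lra.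
Qed.

Lemma torus_f_B n d :
  (forall k : pt, ~ ((Z.abs (fst d + Z.of_nat (2 * n) * fst k) <= Z.of_nat K)%Z /\
                     (Z.abs (snd d + Z.of_nat (2 * n) * snd k) <= Z.of_nat K)%Z)) ->
  f (real (Glb_Rbar (tset B (2 * n) d))) = 0.
Proof. intros Hk. apply HfR.
  assert (Hel : forall e, tset B (2 * n) d e -> R1 < e).
  { intros e [k ->]. apply far_norm. simpl. specialize (Hk k). lia. }
  apply (glb_le _ (lat_norm2 B ((fst d + Z.of_nat (2 * n) * 0)%Z, (snd d + Z.of_nat (2 * n) * 0)%Z))).
  - exists (0%Z, 0%Z). reflexivity.
  - intros e He. apply Hel in He. lra.
Qed.

Lemma W_local v (g : pt -> R) :
  latsum (fun u => if zz_eqb u v then 0 else f (lat_norm2 B (zsub u v)) * g u)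
  = sl (box K) (fun w => f (lat_norm2 B w) * g (padd v w)).
Proof.
  unfold latsum.
  set (c := sl (box K) (fun w => f (lat_norm2 B w) * g (padd v w))).
  rewrite (Lim_seq_ext_loc _ (fun _ => c)). rewrite Lim_seq_const. reflexivity.
  exists (K + Z.to_nat (Z.abs (fst v)) + Z.to_nat (Z.abs (snd v)))%nat. intros M HM.
  unfold boxsum. rewrite sumlist_sl.
  rewrite (sum_incl_eq pt_eq_dec (map (padd v) (box K))).
  - rewrite sl_map. apply sl_ext. intros w Hw.
    destruct (zz_eqb (padd v w) v) eqn:E.
    + apply zz_eqb_spec in E. unfold padd in E. destruct v, w; simpl in *. inversion E.
      replace z1 with 0%Z by lia. replace z2 with 0%Z by lia. rewrite lat_norm2_0, hf0. ring.
    + f_equal. f_equal. f_equal. unfold zsub, padd. destruct v, w; simpl. f_equal; ring.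
  - apply NoDup_map_NoDup_ForallPairs; [|apply NoDup_box].
    intros x y _ _ E. unfold padd in E. destruct x, y, v; simpl in *. inversion E. f_equal; lia.
  - apply NoDup_box.
  - intros u Hu. apply in_map_iff in Hu. destruct Hu as [w [<- Hw]]. apply in_box in Hw.
    apply in_box. destruct v, w; simpl in *. lia.
  - intros u Hu Hn. destruct (zz_eqb u v); [reflexivity|].
    rewrite HfR; [ring|]. apply Rlt_le. apply far_norm.
    destruct (Z_lt_le_dec (Z.of_nat K) (Z.abs (fst (zsub u v)))) as [?|H1]; [left; auto|].
    destruct (Z_lt_le_dec (Z.of_nat K) (Z.abs (snd (zsub u v)))) as [?|H2]; [right; auto|].
    exfalso. apply Hn. apply in_map_iff. exists (zsub u v). split.
    + unfold padd, zsub; destruct u, v; simpl; f_equal; ring.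
    + apply in_box. lia.
Qed.

Lemma WN_local n v (g : pt -> R) : (Z.of_nat K < Z.of_nat n)%Z -> inT n v ->
  sumlist (trunc (2 * n)) (fun u => if zz_eqb u v then 0 else f (torus_d2 B (2 * n) u v) * g u)
  = sl (box K) (fun w => f (lat_norm2 B w) * g (wrap (Z.of_nat n) (padd v w))).
Proof.
  intros Hn Hv. remember (Z.of_nat n) as nz eqn:Hnz. assert (Hn0 : (0 < nz)%Z) by lia.
  rewrite sumlist_sl.
  rewrite (sum_incl_eq pt_eq_dec (map (fun w => wrap nz (padd v w)) (box K))).
  - rewrite sl_map. apply sl_ext. intros w Hw. apply in_box in Hw.
    destruct v as [v1 v2], w as [w1 w2]. unfold wrap, padd in *; simpl in *.
    unfold inT in Hv; simpl in Hv.
    destruct (zz_eqb (wrapZ nz (v1 + w1), wrapZ nz (v2 + w2)) (v1, v2)) eqn:E.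
    + apply zz_eqb_spec in E. inversion E as [[Ea Eb]].
      rewrite <- (wrapZ_id nz v1) in Ea at 2 by lia. rewrite <- (wrapZ_id nz v2) in Eb at 2 by lia.
      apply wrapZ_inj in Ea; auto. apply wrapZ_inj in Eb; auto.
      destruct Ea as [ka Ea]; destruct Eb as [kb Eb].
      assert (v1 + w1 - v1 = 0)%Z by (apply (small_mult nz (v1 + w1 - v1) ka); lia).
      assert (v2 + w2 - v2 = 0)%Z by (apply (small_mult nz (v2 + w2 - v2) kb); lia).
      replace w1 with 0%Z by lia. replace w2 with 0%Z by lia. rewrite lat_norm2_0, hf0. ring.
    + f_equal. rewrite torus_tset.
      destruct (wrapZ_cong nz (v1 + w1) Hn0) as [ka Ea].
      destruct (wrapZ_cong nz (v2 + w2) Hn0) as [kb Eb].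
      apply (torus_f_A n _ (w1, w2) ((- ka)%Z, (- kb)%Z)); simpl; try lia.
  - apply NoDup_map_NoDup_ForallPairs; [|apply NoDup_box].
    intros x y Hx Hy E. apply in_box in Hx; apply in_box in Hy.
    destruct x as [x1 x2], y as [y1 y2], v as [v1 v2]. unfold wrap, padd in E; simpl in *.
    inversion E as [[Ea Eb]].
    apply wrapZ_inj in Ea; auto. apply wrapZ_inj in Eb; auto.
    destruct Ea as [ka Ea]; destruct Eb as [kb Eb].
    assert (x1 - y1 = 0)%Z by (apply (small_mult nz _ ka); lia).
    assert (x2 - y2 = 0)%Z by (apply (small_mult nz _ kb); lia).
    f_equal; lia.
  - apply NoDup_trunc.
  - intros u Hu. apply in_map_iff in Hu. destruct Hu as [w [<- Hw]].
    apply in_trunc_iff. unfold inT, wrap; simpl.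
    pose proof (wrapZ_range nz (fst (padd v w)) Hn0). pose proof (wrapZ_range nz (snd (padd v w)) Hn0).
    unfold padd in *; simpl in *. lia.
  - intros u Hu Hni. destruct (zz_eqb u v); [reflexivity|].
    rewrite torus_tset, torus_f_B; [ring|].
    intros k [H1 H2]. apply Hni. apply in_map_iff.
    exists (fst (zsub u v) + Z.of_nat (2 * n) * fst k, snd (zsub u v) + Z.of_nat (2 * n) * snd k)%Z.
    split.
    + apply in_trunc_iff in Hu. unfold inT in Hu.
      destruct u as [u1 u2], v as [v1 v2], k as [k1 k2]; unfold wrap, padd, zsub in *; simpl in *.
      f_equal.
      * transitivity (wrapZ nz (u1 + 2 * nz * k1)); [f_equal; lia|].
        rewrite wrapZ_shift by lia. apply wrapZ_id. lia.
      * transitivity (wrapZ nz (u2 + 2 * nz * k2)); [f_equal; lia|].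
        rewrite wrapZ_shift by lia. apply wrapZ_id. lia.
    + apply in_box. unfold zsub in *; simpl in *. lia.
Qed.
End Torus.


Lemma sum_reindex_le (l L : list pt) (P : pt -> bool) (phi : pt -> pt) (h : pt -> R) :
  NoDup l -> NoDup L ->
  (forall x y, In x l -> In y l -> P x = true -> P y = true -> phi x = phi y -> x = y) ->
  (forall x, In x l -> P x = true -> In (phi x) L) -> (forall z, 0 <= h z) ->
  sl l (fun x => if P x then h (phi x) else 0) <= sl L h.
Proof. intros Hl HL Hinj Hin Hh.
  rewrite <- (sl_filter P l (fun x => h (phi x))). rewrite <- sl_map.
  apply (sum_incl_le pt_eq_dec); auto.
  - apply NoDup_map_NoDup_ForallPairs; [|apply NoDup_filter; auto].
    intros x y Hx Hy. apply filter_In in Hx; apply filter_In in Hy. apply Hinj; tauto.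
  - intros z Hz. apply in_map_iff in Hz. destruct Hz as [x [<- Hx]]. apply filter_In in Hx. apply Hin; tauto.
Qed.

Definition inboxb (M : nat) (z : pt) : bool :=
  andb (Z.leb (Z.abs (fst z)) (Z.of_nat M)) (Z.leb (Z.abs (snd z)) (Z.of_nat M)).
Definition farb (t : Z) (z : pt) : bool := orb (Z.leb t (Z.abs (fst z))) (Z.leb t (Z.abs (snd z))).

Lemma inboxb_iff M z : inboxb M z = true <-> In z (box M).
Proof. unfold inboxb. rewrite Bool.andb_true_iff, !Z.leb_le, in_box. lia. Qed.
Lemma farb_iff t z : farb t z = true <-> (t <= Z.abs (fst z) \/ t <= Z.abs (snd z))%Z.
Proof. unfold farb. rewrite Bool.orb_true_iff, !Z.leb_le. tauto. Qed.

Lemma tail (psi : pt -> R) : l2 psi -> forall eps, 0 < eps -> exists t0 : Z,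
  forall t, (t0 <= t)%Z -> forall M, boxsum M (fun z => if farb t z then psi z ^ 2 else 0) <= eps.
Proof.
  intros [C HC] eps Heps.
  set (E := fun x => exists M, x = boxsum M (fun v => psi v ^ 2)).
  destruct (completeness E) as [S [HS1 HS2]].
  { exists C. intros x [M ->]. auto. }
  { exists (boxsum 0 (fun v => psi v ^ 2)). exists 0%nat. auto. }
  destruct (classic (exists M1, S - eps < boxsum M1 (fun v => psi v ^ 2))) as [[M1 HM1]|Hno].
  2:{ exfalso. assert (S <= S - eps); [|lra]. apply HS2. intros x [M ->].
      apply Rnot_lt_le. intro; apply Hno; eauto. }
  exists (Z.of_nat M1 + 1)%Z. intros t Ht M.
  set (M2 := Nat.max M M1).
  assert (HM2 : boxsum M2 (fun v => psi v ^ 2) <= S) by (apply HS1; exists M2; auto).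
  unfold boxsum in *. rewrite sumlist_sl in *.
  assert (Hsplit : sl (box M2) (fun v => psi v ^ 2) =
     sl (box M2) (fun z => if inboxb M1 z then psi z ^ 2 else 0) +
     sl (box M2) (fun z => if inboxb M1 z then 0 else psi z ^ 2)).
  { rewrite <- sl_plus. apply sl_ext. intros; destruct (inboxb M1 x); ring. }
  assert (Hfirst : sl (box M2) (fun z => if inboxb M1 z then psi z ^ 2 else 0) =
                   sl (box M1) (fun v => psi v ^ 2)).
  { rewrite (sum_incl_eq pt_eq_dec (box M1)); try apply NoDup_box.
    - apply sl_ext. intros z Hz. apply inboxb_iff in Hz. rewrite Hz. auto.
    - intros z Hz. apply in_box in Hz. apply in_box. unfold M2. lia.
    - intros z _ Hz. rewrite <- inboxb_iff in Hz. destruct (inboxb M1 z); congruence. }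
  assert (Hsecond : sl (box M) (fun z => if farb t z then psi z ^ 2 else 0) <=
                    sl (box M2) (fun z => if inboxb M1 z then 0 else psi z ^ 2)).
  { apply Rle_trans with (sl (box M) (fun z => if inboxb M1 z then 0 else psi z ^ 2)).
    - apply sl_le. intros z _. destruct (farb t z) eqn:Ef; [|destruct (inboxb M1 z); [lra| apply pow2_ge_0]].
      destruct (inboxb M1 z) eqn:Eb; [|lra]. apply farb_iff in Ef. apply inboxb_iff, in_box in Eb. lia.
    - apply (sum_incl_le pt_eq_dec); try apply NoDup_box.
      + intros z Hz. apply in_box in Hz. apply in_box. unfold M2. lia.
      + intros z _. destruct (inboxb M1 z); [lra|apply pow2_ge_0]. }
  lra.
Qed.


Section Main.
Variables (B : mat2) (f : R -> R) (R1 : R) (K : nat).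
Hypothesis HK : forall d : pt, lat_norm2 B d <= R1 ->
    (Z.abs (fst d) <= Z.of_nat K)%Z /\ (Z.abs (snd d) <= Z.of_nat K)%Z.
Hypothesis HfR : forall y, R1 <= y -> f y = 0.
Hypothesis hf0 : f 0 = 0.
Hypothesis hf_nonneg : forall x, 0 <= f x.

Lemma sq_diff (x y : R) : (x - y) ^ 2 <= 2 * x ^ 2 + 2 * y ^ 2.
Proof. assert (E : 2 * x ^ 2 + 2 * y ^ 2 - (x - y) ^ 2 = (x + y) ^ 2) by ring.
  pose proof (pow2_ge_0 (x + y)). lra. Qed.

Definition FF := sl (box K) (fun w => f (lat_norm2 B w)).

Lemma FF_nonneg : 0 <= FF.
Proof. apply sl_nonneg; auto. Qed.

Definition goodb (n : nat) (v : pt) : bool :=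
  andb (Z.ltb (Z.abs (fst v)) (Z.of_nat n - Z.of_nat K)) (Z.ltb (Z.abs (snd v)) (Z.of_nat n - Z.of_nat K)).

Definition aa n (psi : pt -> R) v w :=
  (if in_trunc (2 * n) v then psi (wrap (Z.of_nat n) (padd v w)) else 0) - psi (padd v w).

Lemma e_formula n psi v : (K < n)%nat ->
  WN B f (2 * n) psi v - W B f psi v = sl (box K) (fun w => f (lat_norm2 B w) * aa n psi v w).
Proof. intros Hn. unfold WN, W, aa.
  rewrite (W_local B f R1 K HK HfR hf0).
  destruct (in_trunc (2 * n) v) eqn:E.
  - rewrite (WN_local B f R1 K HK HfR hf0) by (try lia; apply in_trunc_b; auto).
    rewrite <- sl_minus. apply sl_ext. intros; ring.
  - replace 0 with (sl (box K) (fun w : pt => 0)) at 1 by (apply sl_zero; auto).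
    rewrite <- sl_minus. apply sl_ext. intros; ring.
Qed.

Lemma aa_sq n psi v w : (K < n)%nat -> In w (box K) ->
  (aa n psi v w) ^ 2 <= if goodb n v then 0 else
     2 * (if in_trunc (2 * n) v then psi (wrap (Z.of_nat n) (padd v w)) ^ 2 else 0) + 2 * psi (padd v w) ^ 2.
Proof. intros Hn Hw. unfold aa. destruct (goodb n v) eqn:Eg.
  - unfold goodb in Eg. apply Bool.andb_true_iff in Eg. rewrite !Z.ltb_lt in Eg.
    apply in_box in Hw.
    assert (Hv : inT n v) by (unfold inT; lia). apply in_trunc_b in Hv. rewrite Hv.
    replace (wrap (Z.of_nat n) (padd v w)) with (padd v w). simpl; lra.
    destruct v, w; unfold wrap, padd; simpl in *. rewrite !wrapZ_id by lia. auto.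
  - destruct (in_trunc (2 * n) v).
    + apply sq_diff.
    + pose proof (sq_diff 0 (psi (padd v w))). replace (0 ^ 2) with 0 in H by ring. lra.
Qed.

Lemma far1 n v w : (K < n)%nat -> inT n v -> goodb n v = false -> In w (box K) ->
  farb (Z.of_nat n - 2 * Z.of_nat K) (wrap (Z.of_nat n) (padd v w)) = true.
Proof. intros Hn Hv Eg Hw. apply farb_iff. apply in_box in Hw.
  unfold goodb in Eg. apply Bool.andb_false_iff in Eg. rewrite !Z.ltb_ge in Eg.
  destruct v as [v1 v2], w as [w1 w2]; unfold inT, wrap, padd in *; simpl in *.
  assert (Hc : forall a b, (- Z.of_nat n <= a < Z.of_nat n)%Z -> (Z.of_nat n - Z.of_nat K <= Z.abs a)%Z ->
     (- Z.of_nat K <= b <= Z.of_nat K)%Z ->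
     (Z.of_nat n - 2 * Z.of_nat K <= Z.abs (wrapZ (Z.of_nat n) (a + b)))%Z).
  { intros a b Ha Hab Hb.
    destruct (Z_lt_le_dec (a + b) (- Z.of_nat n)).
    - rewrite wrapZ_lo by lia. lia.
    - destruct (Z_lt_le_dec (a + b) (Z.of_nat n)).
      + rewrite wrapZ_id by lia. lia.
      + rewrite wrapZ_hi by lia. lia. }
  destruct Eg as [Eg|Eg]; [left|right]; apply Hc; lia.
Qed.

Lemma far2 n v w : goodb n v = false -> In w (box K) ->
  farb (Z.of_nat n - 2 * Z.of_nat K) (padd v w) = true.
Proof. intros Eg Hw. apply farb_iff. apply in_box in Hw.
  unfold goodb in Eg. apply Bool.andb_false_iff in Eg. rewrite !Z.ltb_ge in Eg.
  destruct v as [v1 v2], w as [w1 w2]; unfold padd in *; cbn [fst snd] in *. lia.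
Qed.

Definition tailsum (psi : pt -> R) (t : Z) (M : nat) :=
  boxsum M (fun z => if farb t z then psi z ^ 2 else 0).

Lemma bound_e psi n tau : (K < n)%nat ->
  (forall M, tailsum psi (Z.of_nat n - 2 * Z.of_nat K) M <= tau) ->
  forall M, boxsum M (fun v => (WN B f (2 * n) psi v - W B f psi v) ^ 2) <= 4 * FF ^ 2 * tau.
Proof.
  intros Hn Ht M. set (t := (Z.of_nat n - 2 * Z.of_nat K)%Z) in *.
  set (nz := Z.of_nat n).
  set (h := fun z => if farb t z then psi z ^ 2 else 0).
  assert (Hh : forall z, 0 <= h z) by (intros; unfold h; destruct (farb t z); [apply pow2_ge_0|lra]).
  set (bb := fun v w => if goodb n v then 0 else
     2 * (if in_trunc (2 * n) v then psi (wrap nz (padd v w)) ^ 2 else 0) + 2 * psi (padd v w) ^ 2).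
  assert (Hbb : forall w, In w (box K) -> sl (box M) (fun v => bb v w) <= 4 * tau).
  { intros w Hw.
    assert (E : sl (box M) (fun v => bb v w) =
       2 * sl (box M) (fun v => if andb (negb (goodb n v)) (in_trunc (2 * n) v) then h (wrap nz (padd v w)) else 0)
       + 2 * sl (box M) (fun v => if negb (goodb n v) then h (padd v w) else 0)).
    { rewrite <- !sl_scal, <- sl_plus. apply sl_ext. intros v Hv. unfold bb.
      destruct (goodb n v) eqn:Eg; cbn [negb andb]; [ring|].
      unfold h. assert (farb t (padd v w) = true) as -> by (apply far2; auto).
      destruct (in_trunc (2 * n) v) eqn:Et; cbn [negb andb]; [|ring].
      assert (farb t (wrap nz (padd v w)) = true) as -> by (apply far1; auto; apply in_trunc_b; auto). ring. }
    assert (X : sl (box M) (fun v => if andb (negb (goodb n v)) (in_trunc (2 * n) v) then h (wrap nz (padd v w)) else 0) <= tau).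
    { eapply Rle_trans; [apply (sum_reindex_le (box M) (box n)); try apply NoDup_box|].
      - intros x y _ _ Px Py Exy. apply Bool.andb_true_iff in Px; apply Bool.andb_true_iff in Py.
        destruct Px as [_ Px]; destruct Py as [_ Py]. apply in_trunc_b in Px; apply in_trunc_b in Py.
        destruct x as [x1 x2], y as [y1 y2], w as [w1 w2]; unfold inT, wrap, padd in *; simpl in *.
        inversion Exy as [[Ea Eb]]. apply wrapZ_inj in Ea; [|lia]. apply wrapZ_inj in Eb; [|lia].
        destruct Ea as [ka Ea]; destruct Eb as [kb Eb].
        assert (x1 - y1 = 0)%Z by (apply (small_mult nz _ ka); unfold nz in *; lia).
        assert (x2 - y2 = 0)%Z by (apply (small_mult nz _ kb); unfold nz in *; lia).
        f_equal; lia.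
      - intros x _ _. apply in_box.
        assert (Hr : forall z, (- nz <= wrapZ nz z < nz)%Z) by (intro; apply wrapZ_range; unfold nz; lia).
        unfold wrap. cbn [fst snd].
        pose proof (Hr (fst (padd x w))). pose proof (Hr (snd (padd x w))).
        unfold nz in *. lia.
      - auto.
      - apply Ht. }
    assert (Y : sl (box M) (fun v => if negb (goodb n v) then h (padd v w) else 0) <= tau).
    { eapply Rle_trans; [apply (sum_reindex_le (box M) (box (M + K))); try apply NoDup_box|].
      - intros x y _ _ _ _ Exy. destruct x, y, w; unfold padd in Exy; simpl in Exy. inversion Exy. f_equal; lia.
      - intros x Hx _. apply in_box in Hx. apply in_box in Hw. apply in_box.
        destruct x, w; unfold padd; simpl in *. lia.
      - auto.
      - apply Ht. }
    lra. }
  unfold boxsum. rewrite sumlist_sl.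
  apply Rle_trans with (sl (box M) (fun v => FF * sl (box K) (fun w => f (lat_norm2 B w) * bb v w))).
  { apply sl_le. intros v _. rewrite e_formula by auto.
    eapply Rle_trans; [apply sl_CS; auto|]. fold FF. apply Rmult_le_compat_l; [apply FF_nonneg|].
    apply sl_le. intros w Hw. apply Rmult_le_compat_l; auto. apply aa_sq; auto. }
  rewrite sl_scal, sl_exch.
  apply Rle_trans with (FF * sl (box K) (fun w => f (lat_norm2 B w) * (4 * tau))).
  { apply Rmult_le_compat_l; [apply FF_nonneg|]. apply sl_le. intros w Hw.
    rewrite sl_scal. apply Rmult_le_compat_l; auto. }
  rewrite (sl_ext _ _ (fun w => (4 * tau) * f (lat_norm2 B w))) by (intros; ring).
  rewrite sl_scal. fold FF. right; ring.
Qed.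

Lemma degN_F n : (K < n)%nat -> degN B f (2 * n) = FF.
Proof. intros Hn. unfold degN.
  transitivity (sumlist (trunc (2 * n)) (fun u => if zz_eqb u (0%Z, 0%Z) then 0
     else f (torus_d2 B (2 * n) u (0%Z, 0%Z)) * (fun _ => 1) u)).
  { rewrite !sumlist_sl. apply sl_ext. intros; destruct (zz_eqb x (0%Z, 0%Z)); ring. }
  rewrite (WN_local B f R1 K HK HfR hf0) by (try lia; unfold inT; simpl; lia).
  unfold FF. apply sl_ext. intros; ring.
Qed.

Lemma deg_F : deg B f = FF.
Proof. unfold deg.
  transitivity (latsum (fun u => if zz_eqb u (0%Z, 0%Z) then 0
     else f (lat_norm2 B (zsub u (0%Z, 0%Z))) * (fun _ => 1) u)).
  { unfold latsum. f_equal. apply Lim_seq_ext. intros M. unfold boxsum. rewrite !sumlist_sl.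
    apply sl_ext. intros [a b] _. destruct (zz_eqb (a, b) (0%Z, 0%Z)); [ring|].
    unfold zsub; simpl. rewrite !Z.sub_0_r. ring. }
  rewrite (W_local B f R1 K HK HfR hf0). unfold FF. apply sl_ext. intros; ring.
Qed.

Lemma LN_formula n psi v : (K < n)%nat ->
  LN B f (2 * n) psi v - L B f psi v =
  FF * ((if in_trunc (2 * n) v then 1 else 0) - 1) * psi v - (WN B f (2 * n) psi v - W B f psi v).
Proof. intros Hn. unfold LN, L. rewrite degN_F, deg_F by auto.
  destruct (in_trunc (2 * n) v) eqn:E; [ring|].
  unfold WN at 1. rewrite E. ring.
Qed.

Lemma bound_L psi n tau : (K < n)%nat ->
  (forall M, tailsum psi (Z.of_nat n - 2 * Z.of_nat K) M <= tau) ->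
  forall M, boxsum M (fun v => (LN B f (2 * n) psi v - L B f psi v) ^ 2) <= 10 * FF ^ 2 * tau.
Proof.
  intros Hn Ht M. pose proof (bound_e psi n tau Hn Ht M) as He.
  unfold boxsum in *. rewrite sumlist_sl in *.
  apply Rle_trans with (sl (box M) (fun v => 2 * FF ^ 2 * (if in_trunc (2 * n) v then 0 else psi v ^ 2)
       + 2 * (WN B f (2 * n) psi v - W B f psi v) ^ 2)).
  { apply sl_le. intros v _. rewrite LN_formula by auto.
    set (e := WN B f (2 * n) psi v - W B f psi v).
    destruct (in_trunc (2 * n) v).
    - pose proof (sq_diff (FF * (1 - 1) * psi v) e).
      assert ((FF * (1 - 1) * psi v) ^ 2 = 0) by ring. lra.
    - pose proof (sq_diff (FF * (0 - 1) * psi v) e).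
      assert ((FF * (0 - 1) * psi v) ^ 2 = FF ^ 2 * psi v ^ 2) by ring. lra. }
  rewrite sl_plus, !sl_scal.
  assert (sl (box M) (fun v => if in_trunc (2 * n) v then 0 else psi v ^ 2) <= tau).
  { eapply Rle_trans; [|apply (Ht M)]. unfold tailsum, boxsum.
    apply sl_le. intros v _. destruct (in_trunc (2 * n) v) eqn:E.
    - destruct (farb _ v); [apply pow2_ge_0|lra].
    - assert (farb (Z.of_nat n - 2 * Z.of_nat K) v = true) as ->; [|lra].
      apply farb_iff. assert (~ inT n v) by (rewrite <- in_trunc_b; congruence).
      unfold inT in *. lia. }
  assert (0 <= FF ^ 2) by apply pow2_ge_0.
  assert (0 <= tau).
  { eapply Rle_trans; [|apply (Ht 0%nat)]. unfold tailsum, boxsum.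
    apply sl_nonneg. intros; destruct (farb _ x); [apply pow2_ge_0|lra]. }
  nra.
Qed.
End Main.


Theorem proposition4p4 (B : mat2) (f : R -> R)
  (hB : det2 B <> 0)
  (hf_nonneg : forall x : R, 0 <= f x)
  (hf_supp : exists Rs : R, forall x : R, Rs < Rabs x -> f x = 0)
  (hf0 : f 0 = 0)
  (hf_sum : ex_finite_lim_seq
     (fun M => boxsum M (fun u => if zz_eqb u (0%Z, 0%Z) then 0 else f (lat_norm2 B u)))) :
  strong_conv_even (WN B f) (W B f) /\ strong_conv_even (LN B f) (L B f).
Proof.
  destruct hf_supp as [Rs HRs].
  set (R1 := Rabs Rs + 1).
  assert (HR1 : 0 <= R1) by (unfold R1; pose proof (Rabs_pos Rs); lra).
  assert (HfR : forall y, R1 <= y -> f y = 0).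
  { intros y Hy. apply HRs. unfold R1 in Hy. pose proof (Rle_abs Rs).
    rewrite Rabs_right by (pose proof (Rabs_pos Rs); lra). lra. }
  destruct (norm_bound B hB R1 HR1) as [K HK].
  remember (FF B f K) as F eqn:HFd.
  assert (HF : 0 <= F) by (rewrite HFd; apply FF_nonneg; auto).
  assert (main : forall (psi : pt -> R), l2 psi -> forall eps, 0 < eps -> exists N0 : nat,
     forall N, Nat.Even N -> (N0 <= N)%nat -> forall M,
       boxsum M (fun v => (WN B f N psi v - W B f psi v) ^ 2) <= eps /\
       boxsum M (fun v => (LN B f N psi v - L B f psi v) ^ 2) <= eps).
  { intros psi Hpsi eps Heps.
    set (tau := eps / (10 * F ^ 2 + 1)).
    assert (Hden : 0 < 10 * F ^ 2 + 1) by (pose proof (pow2_ge_0 F); lra).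
    assert (Htau : 0 < tau) by (unfold tau; apply Rdiv_lt_0_compat; lra).
    destruct (tail psi Hpsi tau Htau) as [t0 Ht0].
    exists (2 * (3 * K + 1 + Z.to_nat t0))%nat. intros N [m ->] HN M.
    assert (Hm : (K < m)%nat) by lia.
    assert (Ht : forall M, tailsum psi (Z.of_nat m - 2 * Z.of_nat K) M <= tau).
    { intros M'. apply Ht0. lia. }
    assert (E : 10 * F ^ 2 * tau <= eps).
    { apply Rle_trans with ((10 * F ^ 2 + 1) * tau).
      - apply Rmult_le_compat_r; lra.
      - right. unfold tau. field. lra. }
    pose proof (bound_e B f R1 K HK HfR hf0 hf_nonneg psi m tau Hm Ht M).
    pose proof (bound_L B f R1 K HK HfR hf0 hf_nonneg psi m tau Hm Ht M).
    rewrite <- HFd in *. assert (0 <= F ^ 2) by apply pow2_ge_0.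
    assert (4 * F ^ 2 * tau <= 10 * F ^ 2 * tau) by (apply Rmult_le_compat_r; lra).
    split; lra. }
  split; intros psi Hpsi eps Heps; destruct (main psi Hpsi eps Heps) as [N0 HN0];
    exists N0; intros N HE HN M; apply HN0; auto.
Qed.
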